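(* Let $n,m,k,l$ be non-negative integers with $m,k\le n$ and $m+k-n\le l\le\min(m,k)$. Then $p(x\mid n,m,k,l)=0$ for every integer $x$ with $\min(m,\,n-m,\,k)<x\le\lfloor n/2\rfloor$.
   Context: Let $M:=m-l$, $N:=n-m-k+l$. Let $\mathbb{C}^2$ have orthonormal basis $|0\rangle,|1\rangle$ and give $(\mathbb{C}^2)^{\otimes n}$ the induced Hermitian inner product. Define $|\Xi_{n,m|k,l}\rangle:=|1\rangle^{\otimes l}\otimes|0\rangle^{\otimes(k-l)}\otimes\binom{M+N}{M}^{-1/2}\sum_{I}|I\rangle$, the sum over all $I\in\{0,1\}^{n-k}$ with exactly $M$ ones (where $|i_1\cdots i_r\rangle=|i_1\rangle\otimes\cdots\otimes|i_r\rangle$). $\mathfrak S_n$ acts on $(\mathbb{C}^2)^{\otimes n}$ by permuting tensor factors. For $0\le x\le\lfloor n/2\rfloor$, $\mathsf P_{(n-x,x)}$ is the orthogonal projection onto the isotypic component of the irreducible $\mathfrak S_n$-representation labelled by the partition $(n-x,x)$, and $p(x\mid n,m,k,l):=\langle\Xi_{n,m|k,l}|\mathsf P_{(n-x,x)}|\Xi_{n,m|k,l}\rangle$. *)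

(* Defs.v *)
From HB Require Import structures.
From mathcomp Require Import all_boot all_order all_algebra all_fingroup all_field.
From Stdlib Require Import ClassicalEpsilon.
Unset Strict Implicit. Unset Printing Implicit Defensive.
Import Order.TTheory GRing.Theory Num.Theory.
Local Open Scope ring_scope.

(* Basis vectors |i_1 ... i_n> are indexed by bit strings f : 'I_n -> bool,
   position j (0-based) being the j-th tensor factor (true = |1>). *)
Definition bits (n : nat) := {ffun 'I_n -> bool}.
Notation Vn n := ('rV[algC]_(#|{ffun 'I_n -> bool}|)).

Definition ket (n : nat) (f : {ffun 'I_n -> bool}) : Vn n :=
  delta_mx 0 (enum_rank f).

Definition dotV (N : nat) (u v : 'rV[algC]_N) : algC :=
  \sum_(i < N) (u 0 i)^* * v 0 i.

(* S_n acts by permuting tensor factors: the factor in position j is moved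
   to position s j.  Row-vector convention: ket f *m repV s = ket (s.f). *)
Definition permbits (n : nat) (s : 'S_n) (f : {ffun 'I_n -> bool}) :
  {ffun 'I_n -> bool} := [ffun j => f ((s^-1)%g j)].

Definition repV (n : nat) (s : 'S_n) : 'M[algC]_(#|{ffun 'I_n -> bool}|) :=
  \matrix_(i, j) ((permbits n s (enum_val i) == enum_val j)%:R).

(* Permutation module M^{(n-x,x)}: a tabloid of shape (n-x,x) is identified
   with the set of entries of its second row; we take as ambient space the
   functions on all subsets of 'I_n (tabloids are the x-subsets). *)
Notation Mn n := ('rV[algC]_(#|{set 'I_n}|)).

Definition ketS (n : nat) (Y : {set 'I_n}) : Mn n := delta_mx 0 (enum_rank Y).

Definition repM (n : nat) (s : 'S_n) : 'M[algC]_(#|{set 'I_n}|) :=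
  \matrix_(i, j) ((s @: (enum_val i : {set 'I_n}) == (enum_val j : {set 'I_n}))%:R).

(* A tableau of shape (n-x,x) determines (up to the irrelevant order of the
   remaining first-row entries) columns (a i, b i), i < x, with a i in the
   first row and b i in the second row; all 2x entries are distinct. *)
Definition pairf (n x : nat) (a b : 'I_x -> 'I_n) (u : 'I_x + 'I_x) : 'I_n :=
  match u with inl i => a i | inr i => b i end.

(* Polytabloid e_t = sum over the column group of sign * {c t}. *)
Definition polytab (n x : nat) (a b : 'I_x -> 'I_n) : Mn n :=
  \sum_(S : {set 'I_x})
     (-1) ^+ #|S| *: ketS n [set (if i \in S then a i else b i) | i : 'I_x].

Definition Specht (n x : nat) : 'M[algC]_(#|{set 'I_n}|) :=
  (\sum_(ab : {ffun 'I_x -> 'I_n} * {ffun 'I_x -> 'I_n}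
          | injectiveb (pairf n x ab.1 ab.2))
      <<polytab n x ab.1 ab.2>>)%MS.

Definition equivariant (n : nat)
    (phi : 'M[algC]_(#|{set 'I_n}|, #|{ffun 'I_n -> bool}|)) : Prop :=
  forall s : 'S_n, repM n s *m phi = phi *m repV n s.

(* The isotypic component of S^{(n-x,x)} in (C^2)^{(x)n}: the sum of the
   images of all S_n-equivariant linear maps from S^{(n-x,x)} to (C^2)^{(x)n}
   (every such map is the restriction of an equivariant map on M^{(n-x,x)}). *)
Definition in_isotypic (n x : nat) (v : Vn n) : Prop :=
  exists (K : nat)
         (phi : 'I_K -> 'M[algC]_(#|{set 'I_n}|, #|{ffun 'I_n -> bool}|))
         (u : 'I_K -> Mn n),
    (forall j, equivariant n (phi j) /\ (u j <= Specht n x)%MS) /\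
    v = \sum_(j < K) u j *m phi j.

Definition is_isoproj (n x : nat) (v w : Vn n) : Prop :=
  in_isotypic n x w /\ forall y, in_isotypic n x y -> dotV _ y (v - w) = 0.

Definition isoproj (n x : nat) (v : Vn n) : Vn n :=
  epsilon (inhabits 0) (is_isoproj n x v).

Definition bigM (m l : nat) : nat := (m - l)%N.
Definition bigN (n m k l : nat) : nat := ((n + l) - (m + k))%N.

Definition Xi (n m k l : nat) : Vn n :=
  (sqrtC ('C(bigM m l + bigN n m k l, bigM m l)%:R : algC))^-1 *:
  \sum_(f : {ffun 'I_n -> bool}
        | [forall j : 'I_n, ((j < l)%N ==> f j)
                             && (((l <= j)%N && (j < k)%N) ==> ~~ f j)]
          && (#|[set j : 'I_n | (k <= j)%N && f j]| == bigM m l))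
     ket n f.

Definition prob (x n m k l : nat) : algC :=
  dotV _ (Xi n m k l) (isoproj n x (Xi n m k l)).

(* Main.v *)
Require Import Defs.
From HB Require Import structures.
From mathcomp Require Import all_boot all_order all_algebra all_fingroup all_field.
Unset Strict Implicit. Unset Printing Implicit Defensive.
Import Order.TTheory GRing.Theory Num.Theory.
Local Open Scope ring_scope.

Lemma card_interval (n a b : nat) (A : {set 'I_n}) :
  (forall j : 'I_n, j \in A -> (a <= j < b)%N) -> (#|A| <= b - a)%N.
Proof.
move=> HA.
have -> : #|A| = size (map val (enum A)) by rewrite size_map cardE.
rewrite -(size_iota a (b - a)).
apply: uniq_leq_size; first by rewrite map_inj_uniq ?enum_uniq //; exact: val_inj.
move=> y /mapP [j]; rewrite mem_enum => /HA Hj ->.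
rewrite mem_iota; case/andP: Hj => H1 H2; rewrite H1 /=.
by rewrite subnKC // (leq_trans H1) // ltnW.
Qed.

Lemma pick_inj (n x : nat) (a b : 'I_x -> 'I_n) (c : 'I_x -> bool) :
  injective (pairf n x a b) ->
  injective (fun i => pairf n x a b (if c i then inl i else inr i)).
Proof.
move=> Hinj i j /Hinj.
by case: (c i); case: (c j) => // [[]].
Qed.

Lemma pigeon (n x : nat) (g : 'I_x -> 'I_n) (A : {set 'I_n}) :
  injective g -> (forall i, g i \in A) -> (x <= #|A|)%N.
Proof.
move=> Hg HA.
rewrite -{1}(card_ord x) -(card_imset (mem 'I_x) Hg).
apply: subset_leq_card; apply/subsetP => y /imsetP [i _ ->]; exact: HA.
Qed.
Definition Phi (n : nat) (phi : 'M[algC]_(#|{set 'I_n}|, #|{ffun 'I_n -> bool}|))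
  (Y : {set 'I_n}) (f : {ffun 'I_n -> bool}) : algC :=
  phi (enum_rank Y) (enum_rank f).

Lemma permbitsK (n : nat) (s : 'S_n) (g : {ffun 'I_n -> bool}) :
  permbits n s (permbits n s^-1 g) = g.
Proof. by apply/ffunP => j; rewrite !ffunE invgK permKV. Qed.

Lemma equiv_Phi (n : nat) phi (s : 'S_n) (Y : {set 'I_n}) (f : {ffun 'I_n -> bool}) :
  equivariant n phi -> Phi n phi (s @: Y) f = Phi n phi Y (permbits n s^-1 f).
Proof.
move=> /(_ s) /matrixP /(_ (enum_rank Y) (enum_rank f)).
rewrite !mxE /Phi.
rewrite (bigD1 (enum_rank (s @: Y))) //= big1 => [|k Hk]; last first.
  rewrite mxE enum_rankK; case: eqP => [E|]; last by rewrite mul0r.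
  by move: Hk; rewrite E enum_valK eqxx.
rewrite (bigD1 (enum_rank (permbits n s^-1 f))) //= [X in _ = _ + X]big1 => [|k Hk]; last first.
  rewrite mxE enum_rankK; case: eqP => [E|]; last by rewrite mulr0.
  move: Hk; rewrite -E.
  have -> : permbits n s^-1 (permbits n s (enum_val k)) = enum_val k.
    by apply/ffunP => j; rewrite !ffunE invgK permK.
  by rewrite enum_valK eqxx.
by rewrite !mxE !enum_rankK permbitsK !eqxx mul1r mulr1 !addr0 => ->.

Qed.
Definition Yset (n x : nat) (a b : 'I_x -> 'I_n) (S : {set 'I_x}) : {set 'I_n} :=
  [set (if i \in S then a i else b i) | i : 'I_x].

Definition toggle (x : nat) (i0 : 'I_x) (S : {set 'I_x}) : {set 'I_x} :=
  if i0 \in S then S :\ i0 else i0 |: S.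
Arguments toggle {x}.

Lemma toggleK (x : nat) (i0 : 'I_x) : involutive (toggle i0).
Proof.
move=> S; case H: (i0 \in S); rewrite /toggle H.
  rewrite !inE eqxx /= setD1K //.
by rewrite setU11 setU1K ?H.
Qed.

Lemma mem_toggle (x : nat) (i0 i : 'I_x) (S : {set 'I_x}) :
  (i \in toggle i0 S) = (if i == i0 then i0 \notin S else i \in S).
Proof.
rewrite /toggle; case: eqP => [->|/eqP ne].
  by case: ifP => H; rewrite !inE ?eqxx ?H.
by case: ifP => H; rewrite !inE ?ne ?(negbTE ne).
Qed.

Lemma sign_toggle (x : nat) (i0 : 'I_x) (S : {set 'I_x}) :
  (-1) ^+ #|toggle i0 S| = - (-1) ^+ #|S| :> algC.
Proof.
rewrite /toggle; case: ifP => H.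
  by rewrite [in RHS](cardsD1 i0) H exprS mulN1r opprK.
by rewrite cardsU1 H exprS mulN1r.
Qed.

Lemma Yset_toggle (n x : nat) (a b : 'I_x -> 'I_n) (i0 : 'I_x) (S : {set 'I_x}) :
  injective (pairf n x a b) ->
  tperm (a i0) (b i0) @: Yset n x a b S = Yset n x a b (toggle i0 S).
Proof.
move=> Hinj; rewrite /Yset -imset_comp; apply: eq_imset => i /=.
rewrite mem_toggle; case: eqP => [->|/eqP ne].
  by case: (i0 \in S); rewrite /= ?tpermL ?tpermR.
have Ha : a i0 != (if i \in S then a i else b i).
  by case: (i \in S); apply/eqP => E;
     [have := Hinj (inl i0) (inl i) E | have := Hinj (inl i0) (inr i) E];
     move=> // [] E'; move: ne; rewrite E' eqxx.
have Hb : b i0 != (if i \in S then a i else b i).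
  by case: (i \in S); apply/eqP => E;
     [have := Hinj (inr i0) (inl i) E | have := Hinj (inr i0) (inr i) E];
     move=> // [] E'; move: ne; rewrite E' eqxx.
by rewrite tpermD.
Qed.

Definition Tsum (n x : nat) phi (a b : 'I_x -> 'I_n) (f : {ffun 'I_n -> bool}) : algC :=
  \sum_(S : {set 'I_x}) (-1) ^+ #|S| * Phi n phi (Yset n x a b S) f.

Lemma T_tperm (n x : nat) phi (a b : 'I_x -> 'I_n) (i0 : 'I_x) f :
  injective (pairf n x a b) -> equivariant n phi ->
  Tsum n x phi a b f = - Tsum n x phi a b (permbits n (tperm (a i0) (b i0)) f).
Proof.
move=> Hinj Heq; rewrite /Tsum (reindex_inj (inv_inj (toggleK _ i0))) /=.
rewrite -sumrN; apply: eq_bigr => S _.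
rewrite sign_toggle -Yset_toggle // equiv_Phi // tpermV.
by rewrite mulNr.
Qed.

From mathcomp Require Import zify.

Definition Fpred (n m k l : nat) (f : {ffun 'I_n -> bool}) : bool :=
  [forall j : 'I_n, ((j < l)%N ==> f j)
                   && (((l <= j)%N && (j < k)%N) ==> ~~ f j)]
  && (#|[set j : 'I_n | (k <= j)%N && f j]| == bigM m l).

Lemma ones_bound (n m k l : nat) (f : {ffun 'I_n -> bool}) :
  (l <= minn m k)%N -> Fpred n m k l f -> (#|[set j : 'I_n | f j]| <= m)%N.
Proof.
move=> Hl /andP [/forallP Hf /eqP Hc].
have Hs : [set j : 'I_n | f j] \subset [set j : 'I_n | (j < l)%N] :|: [set j : 'I_n | (k <= j)%N && f j].
  apply/subsetP => j; rewrite !inE => fj; move: (Hf j); rewrite fj /=.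
  case: (ltnP j l) => Hjl; case: (ltnP j k) => Hjk //=.
have H1 : (#|[set j : 'I_n | (j < l)%N]| <= l - 0)%N.
  by apply: card_interval => j; rewrite inE.
have := subset_leq_card Hs; have := cardsUI [set j : 'I_n | (j < l)%N] [set j : 'I_n | (k <= j)%N && f j].
rewrite Hc /bigM; move: H1 Hl; lia.
Qed.

Lemma zeros_bound (n m k l : nat) (f : {ffun 'I_n -> bool}) :
  (k <= n)%N -> (m + k - n <= l)%N -> (l <= minn m k)%N -> Fpred n m k l f ->
  (#|[set j : 'I_n | ~~ f j]| <= n - m)%N.
Proof.
move=> Hk Hmk Hl /andP [/forallP Hf /eqP Hc].
have Hs : [set j : 'I_n | ~~ f j] \subset
   [set j : 'I_n | (l <= j < k)%N] :|: ([set j : 'I_n | (k <= j)%N] :\: [set j | f j]).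
  apply/subsetP => j; rewrite !inE => fj; move: (Hf j); rewrite (negbTE fj) /=.
  case: (ltnP j l) => Hjl; case: (ltnP j k) => Hjk //=.
set A := [set j : 'I_n | (l <= j < k)%N] in Hs *.
set B := [set j : 'I_n | (k <= j)%N] in Hs *.
set C := [set j : 'I_n | f j] in Hs *.
have H1 : (#|A| <= k - l)%N.
  by apply: card_interval => j; rewrite inE.
have H2 : (#|B| <= n - k)%N.
  by apply: card_interval => j; rewrite inE => ->; rewrite /=.
have E : B :&: C = [set j : 'I_n | (k <= j)%N && f j].
  by apply/setP => j; rewrite !inE.
have h3 := cardsID C B; rewrite E Hc /bigM in h3.
have h1 := subset_leq_card Hs.
have h2 := cardsUI A (B :\: C).
move: h1 h2 h3 H1 H2 Hl Hmk Hk.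
generalize #|[set j : 'I_n | ~~ f j]| #|A :|: B :\: C| #|A :&: (B :\: C)| #|A| #|B :\: C| #|B|.
lia.
Qed.

Lemma exists_above (n x k : nat) (a b : 'I_x -> 'I_n) :
  injective (pairf n x a b) -> (k < x)%N ->
  exists i0, (k <= a i0)%N && (k <= b i0)%N.
Proof.
move=> Hinj Hkx.
case: (boolP [exists i, (k <= a i)%N && (k <= b i)%N]) => [/existsP //|/existsPn Hall].
exfalso.
have Hc : (#|[set j : 'I_n | (j < k)%N]| <= k - 0)%N.
  by apply: card_interval => j; rewrite inE.
have P := @pigeon _ _ _ [set j : 'I_n | (j < k)%N] (pick_inj _ _ _ _ (fun i => (a i < k)%N) Hinj).
have H : (x <= #|[set j : 'I_n | (j < k)%N]|)%N.
  apply: P => i /=; rewrite inE; case: (ltnP (a i) k) => //= Hai.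
  by move: (Hall i); rewrite Hai /= -ltnNge.
move: (leq_trans H Hc); rewrite subn0; lia.
Qed.

Lemma exists_eq (n m k l x : nat) (a b : 'I_x -> 'I_n) (f : {ffun 'I_n -> bool}) :
  injective (pairf n x a b) -> Fpred n m k l f ->
  (k <= n)%N -> (m + k - n <= l)%N -> (l <= minn m k)%N ->
  (minn m (n - m) < x)%N ->
  exists i0, f (a i0) == f (b i0).
Proof.
move=> Hinj Hf Hk Hmk Hl Hx.
case: (boolP [exists i, f (a i) == f (b i)]) => [/existsP //|/existsPn Hall].
exfalso.
have H1 := ones_bound _ _ _ _ _ Hl Hf.
have H0 := zeros_bound _ _ _ _ _ Hk Hmk Hl Hf.
have P1 := @pigeon _ _ _ [set j : 'I_n | f j] (pick_inj _ _ _ _ (fun i => f (a i)) Hinj).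
have P0 := @pigeon _ _ _ [set j : 'I_n | ~~ f j] (pick_inj _ _ _ _ (fun i => ~~ f (a i)) Hinj).
have Q1 : (x <= #|[set j : 'I_n | f j]|)%N.
  apply: P1 => i /=; rewrite inE; case: ifP => //= Hai.
  by move: (Hall i); rewrite Hai; case: (f (b i)).
have Q0 : (x <= #|[set j : 'I_n | ~~ f j]|)%N.
  apply: P0 => i /=; rewrite inE; case: ifP => //= Hai.
  by move: (Hall i); move/negbFE: Hai => ->; case: (f (b i)).
move: Q1 Q0 H1 H0 Hx.
generalize #|[set j : 'I_n | f j]| #|[set j : 'I_n | ~~ f j]|.
lia.
Qed.

Lemma eq_opp0 (z : algC) : z = - z -> z = 0.
Proof.
move=> E; have : z *+ 2 == 0 by rewrite mulr2n addr_eq0; exact/eqP.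
by rewrite mulrn_eq0 => /eqP.
Qed.

Lemma sumF (n m k l x : nat) phi (a b : 'I_x -> 'I_n) :
  injective (pairf n x a b) -> equivariant n phi ->
  (k <= n)%N -> (m + k - n <= l)%N -> (l <= minn m k)%N ->
  (minn (minn m (n - m)) k < x)%N ->
  \sum_(f | Fpred n m k l f) Tsum n x phi a b f = 0.
Proof.
move=> Hinj Heq Hk Hmk Hl Hx.
case: (ltnP k x) => Hkx.
- have [i0 /andP [Ha Hb]] := exists_above _ _ _ _ _ Hinj Hkx.
  set t := tperm (a i0) (b i0).
  have hK : involutive (permbits n t).
    by move=> f; have := permbitsK n t f; rewrite /t tpermV.
  have HF : forall f, Fpred n m k l f -> Fpred n m k l (permbits n t f).
    move=> f /andP [/forallP Hf /eqP Hc]; apply/andP; split.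
      apply/forallP => j; rewrite ffunE /t tpermV.
      case: (ltnP j k) => Hjk.
        rewrite tpermD; first by move: (Hf j); rewrite Hjk.
          by apply/eqP => E; move: Ha; rewrite E; lia.
        by apply/eqP => E; move: Hb; rewrite E; lia.
      have H1 : (j < l)%N = false by move: Hl Hjk; lia.
      by rewrite H1 andbF.
    have -> : [set j : 'I_n | (k <= j)%N && permbits n t f j]
              = t @^-1: [set j : 'I_n | (k <= j)%N && f j].
      apply/setP => j; rewrite !inE ffunE /t tpermV.
      by case: tpermP => [->|->|_ _]; rewrite ?Ha ?Hb.
    by rewrite card_preimset ?Hc //; exact: perm_inj.
  have HFe : forall f, Fpred n m k l (permbits n t f) = Fpred n m k l f.
    move=> f; apply/idP/idP; last exact: HF.
    by move/HF; rewrite hK.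
  apply: eq_opp0.
  rewrite {1}(reindex_inj (inv_inj hK)) /= -sumrN.
  apply: eq_big => f; first exact: HFe.
  move=> _; rewrite (T_tperm _ _ _ _ _ i0 _ Hinj Heq) -/t hK.
  by [].
- have Hx' : (minn m (n - m) < x)%N by move: Hx Hkx; lia.
  apply: big1 => f Hf.
  have [i0 /eqP E] := exists_eq _ _ _ _ _ _ _ _ Hinj Hf Hk Hmk Hl Hx'.
  have hf : permbits n (tperm (a i0) (b i0)) f = f.
    apply/ffunP => j; rewrite ffunE tpermV.
    by case: tpermP => [->|->|_ _]; rewrite ?E.
  apply: eq_opp0.
  by rewrite {1}(T_tperm _ _ _ _ _ i0 _ Hinj Heq) hf.
Qed.

From Stdlib Require Import ClassicalEpsilon.

Lemma dotV_conj (N : nat) (u v : 'rV[algC]_N) : dotV _ u v = (dotV _ v u)^*.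
Proof.
rewrite /dotV rmorph_sum; apply: eq_bigr => i _.
by rewrite rmorphM /= conjCK mulrC.
Qed.

Lemma dotV_suml (N K : nat) (w : 'I_K -> 'rV[algC]_N) (v : 'rV[algC]_N) :
  dotV _ (\sum_(j < K) w j) v = \sum_(j < K) dotV _ (w j) v.
Proof.
rewrite /dotV [RHS]exchange_big /=; apply: eq_bigr => i _.
by rewrite summxE rmorph_sum /= mulr_suml.
Qed.

Lemma dotV_Xi (n m k l : nat) (y : 'rV[algC]_(#|{ffun 'I_n -> bool}|)) :
  dotV _ y (Xi n m k l) =
  (sqrtC ('C(bigM m l + bigN n m k l, bigM m l)%:R : algC))^-1 *
  \sum_(f | Fpred n m k l f) (y 0 (enum_rank f))^*.
Proof.
rewrite /Xi /dotV.
under eq_bigr => i _ do rewrite mxE summxE mulrCA mulr_sumr.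
rewrite -mulr_sumr exchange_big /=; congr (_ * _); apply: eq_bigr => f _.
rewrite (bigD1 (enum_rank f)) //= big1 => [|i Hi].
  by rewrite addr0 /ket mxE !eqxx mulr1.
by rewrite /ket mxE (negbTE Hi) andbF mulr0.
Qed.

Lemma polytab_phi (n x : nat) (a b : 'I_x -> 'I_n) phi (f : {ffun 'I_n -> bool}) :
  (polytab n x a b *m phi) 0 (enum_rank f) = Tsum n x phi a b f.
Proof.
rewrite /polytab mulmx_suml summxE; apply: eq_bigr => S _.
by rewrite -scalemxAl mxE /ketS -rowE mxE /Phi /Yset.
Qed.

Lemma Q_Specht (n m k l x : nat) phi (u : 'rV[algC]_(#|{set 'I_n}|)) :
  equivariant n phi ->
  (k <= n)%N -> (m + k - n <= l)%N -> (l <= minn m k)%N ->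
  (minn (minn m (n - m)) k < x)%N ->
  (u <= Specht n x)%MS ->
  \sum_(f | Fpred n m k l f) (u *m phi) 0 (enum_rank f) = 0.
Proof.
move=> Heq Hk Hmk Hl Hx Hu.
set C := phi *m \sum_(f | Fpred n m k l f) (ket n f)^T.
have HQ : forall v : 'rV[algC]_(#|{set 'I_n}|),
    \sum_(f | Fpred n m k l f) (v *m phi) 0 (enum_rank f) = (v *m C) 0 0.
  move=> v; rewrite /C mulmxA mulmx_sumr summxE; apply: eq_bigr => f _.
  rewrite /ket trmx_delta [RHS]mxE (bigD1 (enum_rank f)) //= big1 => [|j Hj].
    by rewrite [in RHS]mxE [in RHS]mxE !eqxx mulr1 addr0 mxE.
  rewrite [delta_mx _ _ _ _]mxE; case: eqP => [E|_]; last by rewrite mulr0.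
  by move: Hj; rewrite E eqxx.
rewrite HQ; suff -> : u *m C = 0 by rewrite mxE.
apply/sub_kermxP; apply: submx_trans Hu _.
apply/sumsmx_subP => ab Hab; rewrite genmxE; apply/sub_kermxP.
apply/matrixP => i j; rewrite !ord1 [RHS]mxE -HQ.
under eq_bigr do rewrite polytab_phi.
apply: sumF => //; exact/injectiveP.
Qed.

Lemma iso_orth (n m k l x : nat) (y : 'rV[algC]_(#|{ffun 'I_n -> bool}|)) :
  (k <= n)%N -> (m + k - n <= l)%N -> (l <= minn m k)%N ->
  (minn (minn m (n - m)) k < x)%N ->
  in_isotypic n x y -> dotV _ y (Xi n m k l) = 0.
Proof.
move=> Hk Hmk Hl Hx [K [phi [u [Hj ->]]]].
rewrite dotV_suml big1 // => j _.
have [Heq Hu] := Hj j.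
rewrite dotV_Xi -rmorph_sum /= (Q_Specht _ _ _ _ _ _ _ Heq Hk Hmk Hl Hx Hu).
by rewrite rmorph0 mulr0.
Qed.

Theorem corollary4p11 (n m k l x : nat) :
  (m <= n)%N -> (k <= n)%N ->
  (m + k - n <= l)%N -> (l <= minn m k)%N ->
  (minn (minn m (n - m)) k < x)%N -> (x <= n./2)%N ->
  prob x n m k l = 0.
Proof.
move=> Hm Hk Hmk Hl Hx _.
have H0 : is_isoproj n x (Xi n m k l) 0.
  split.
    exists 0%N, (fun _ => 0), (fun _ => 0); split; first by case.
    by rewrite big_ord0.
  by move=> y Hy; rewrite subr0 (iso_orth _ _ _ _ _ _ Hk Hmk Hl Hx Hy).
have [Hw _] : is_isoproj n x (Xi n m k l) (isoproj n x (Xi n m k l)).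
  by apply: epsilon_spec; exists 0.
rewrite /prob dotV_conj (iso_orth _ _ _ _ _ _ Hk Hmk Hl Hx Hw).
by rewrite rmorph0.
Qed.
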